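(* Let $(G,d)$ be a boundedly compact $p$-uniformly convex metric space with $p>1$ and $c>0$, $f:G\to\mathbb{R}$ proper, convex and lower semicontinuous, $\lambda>0$. Then: (i) $\operatorname{argmin}f\subset\mathrm{Fix}\,\mathrm{prox}^p_{f,\lambda}$; (ii) for all $x,y\in G$, with $x_+=\mathrm{prox}^p_{f,\lambda}(x)$, $y_+=\mathrm{prox}^p_{f,\lambda}(y)$: $\Delta^{(p,c)}(x,y,x_+,y_+)\ge\frac{c^2}{4}d(x_+,y_+)^p$; (iii) if $c\in(3/2,2]$, then for all $x,y\in G$, $$d(x_+,y_+)^p\le(1+\epsilon_c)d(x,y)^p-\frac{1-\alpha_c}{\alpha_c}\psi^{(p,c)}(x,y,x_+,y_+),\quad\alpha_c=\frac{c(c-1)}{2+c(c-1)},\ \epsilon_c=\frac{2-c}{c-1},$$ i.e. $\mathrm{prox}^p_{f,\lambda}$ is a$\alpha$-fne on $G$ with constant $\alpha_c$ and violation $\epsilon_c$.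
   Context: $(G,d)$ uniquely geodesic; $(1-\tau)x\oplus\tau y$ is the point on the geodesic from $x$ to $y$ at distance $\tau d(x,y)$ from $x$. $p$-uniform convexity with constant $c$: $d(z,(1-\tau)x\oplus\tau y)^p\le(1-\tau)d(z,x)^p+\tau d(z,y)^p-\frac c2\tau(1-\tau)d(x,y)^p$. $f$ convex: $f((1-\tau)x\oplus\tau y)\le(1-\tau)f(x)+\tau f(y)$. $\mathrm{prox}^p_{f,\lambda}(x)=\operatorname{argmin}_{y\in G}\{f(y)+\frac1{p\lambda^{p-1}}d(y,x)^p\}$ (single-valued here). $\Delta^{(p,c)}(x,y,u,v)=\frac c4\big(d(x,v)^p+d(y,u)^p-d(x,u)^p-d(y,v)^p\big)$; $\psi^{(p,c)}(x,y,u,v)=\frac c2\big(d(x,u)^p+d(y,v)^p+d(u,v)^p+d(x,y)^p-d(y,u)^p-d(x,v)^p\big)$. A mapping $T$ is a$\alpha$-fne on $G$ with constant $\alpha\in(0,1)$ and violation $\epsilon\ge0$ if $d(Tx,Ty)^p\le(1+\epsilon)d(x,y)^p-\frac{1-\alpha}{\alpha}\psi^{(p,c)}(x,y,Tx,Ty)$ for all $x,y\in G$. *)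

(* Defs.v *)
From HB Require Import structures.
From mathcomp Require Import all_boot all_order all_algebra.
From mathcomp Require Import all_classical all_reals all_analysis.
Set Implicit Arguments. Unset Strict Implicit. Unset Printing Implicit Defensive.
Import Order.TTheory GRing.Theory Num.Theory numFieldNormedType.Exports.
Local Open Scope classical_set_scope.
Local Open Scope ring_scope.

Section Defs.
Variables (R : realType) (G : choiceType).

Definition is_metric (d : G -> G -> R) : Prop :=
  [/\ forall x y, 0 <= d x y,
      forall x y, d x y = 0 <-> x = y,
      forall x y, d x y = d y x &
      forall x y z, d x z <= d x y + d y z].

Definition is_geodesic (d : G -> G -> R) (x y : G) (gamma : R -> G) : Prop :=
  [/\ gamma 0 = x, gamma 1 = y &
      forall s t, 0 <= s <= 1 -> 0 <= t <= 1 ->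
        d (gamma s) (gamma t) = `|s - t| * d x y].

(* (G,d) is uniquely geodesic, and geo x y tau = (1-tau) x (+) tau y is the
   point on the unique geodesic from x to y at distance tau d(x,y) from x. *)
Definition uniquely_geodesic (d : G -> G -> R) (geo : G -> G -> R -> G) : Prop :=
  forall x y, is_geodesic d x y (geo x y) /\
    (forall gamma, is_geodesic d x y gamma ->
       forall t, 0 <= t <= 1 -> gamma t = geo x y t).

Definition p_uniformly_convex (d : G -> G -> R) (geo : G -> G -> R -> G)
  (p c : R) : Prop :=
  forall x y z tau, 0 <= tau <= 1 ->
    d z (geo x y tau) `^ p <=
      (1 - tau) * d z x `^ p + tau * d z y `^ p
      - c / 2 * tau * (1 - tau) * d x y `^ p.

Definition mcvg (d : G -> G -> R) (u : nat -> G) (x : G) : Prop :=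
  (fun n => d (u n) x) @ \oo --> (0 : R).

(* boundedly compact: every bounded sequence has a convergent subsequence
   (equivalently, closed bounded sets are compact) *)
Definition boundedly_compact (d : G -> G -> R) : Prop :=
  forall u : nat -> G, (exists x0 M, forall n, d x0 (u n) <= M) ->
    exists (phi : nat -> nat) (x : G),
      (forall n, (phi n < phi n.+1)%N) /\ mcvg d (u \o phi) x.

Definition convex_fun (geo : G -> G -> R -> G) (f : G -> R) : Prop :=
  forall x y tau, 0 <= tau <= 1 ->
    f (geo x y tau) <= (1 - tau) * f x + tau * f y.

Definition lsc (d : G -> G -> R) (f : G -> R) : Prop :=
  forall (u : nat -> G) x, mcvg d u x ->
    forall e : R, 0 < e -> \forall n \near \oo, f x - e < f (u n).

Definition argmin (f : G -> R) : set G := [set x | forall y, f x <= f y].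

Definition prox_obj (d : G -> G -> R) (f : G -> R) (p lambda : R) (x y : G) : R :=
  f y + (p * lambda `^ (p - 1))^-1 * d y x `^ p.

Definition prox (d : G -> G -> R) (f : G -> R) (p lambda : R) (x : G) : G :=
  xget x (argmin (prox_obj d f p lambda x)).

Definition Delta (d : G -> G -> R) (p c : R) (x y u v : G) : R :=
  c / 4 * (d x v `^ p + d y u `^ p - d x u `^ p - d y v `^ p).

Definition psi (d : G -> G -> R) (p c : R) (x y u v : G) : R :=
  c / 2 * (d x u `^ p + d y v `^ p + d u v `^ p + d x y `^ p
           - d y u `^ p - d x v `^ p).

End Defs.

(* Main.v *)
Require Import Defs.
From mathcomp Require Import all_boot all_order all_algebra.
From mathcomp Require Import all_classical all_reals all_analysis.
Import Order.TTheory GRing.Theory Num.Theory numFieldNormedType.Exports.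
Local Open Scope classical_set_scope.
Local Open Scope ring_scope.
From mathcomp Require Import ring lra.

Lemma alg_step (R : realType) (K c fu fv fw a b dw D t : R) :
  0 < K -> 0 < t ->
  fu + K * a <= fw + K * dw ->
  fw <= (1 - t) * fu + t * fv ->
  dw <= (1 - t) * a + t * b - c / 2 * t * (1 - t) * D ->
  fu + K * a <= fv + K * b - K * (c / 2) * D * (1 - t).
Proof.
move=> K0 t0 h1 h2 h3.
have h3' : K * dw <= K * ((1 - t) * a + t * b - c / 2 * t * (1 - t) * D).
  by rewrite ler_pM2l.
have h4 : t * (fu + K * a) <= t * (fv + K * b - K * (c / 2) * D * (1 - t)).
  set C := c / 2 in h3 h3' *.
  rewrite -subr_ge0.
  have -> : t * (fv + K * b - K * C * D * (1 - t)) - t * (fu + K * a) =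
    ((1 - t) * fu + t * fv + K * ((1 - t) * a + t * b - C * t * (1 - t) * D))
     - (fu + K * a) by ring.
  lra.
by rewrite ler_pM2l in h4.
Qed.

Lemma alg_lim (R : realType) (A B Q : R) : 0 <= Q ->
  (forall t, 0 < t -> t < 1 -> A <= B - Q * (1 - t)) -> A <= B - Q.
Proof.
move=> Q0 H; apply/ler_addgt0Pr => e e0.
have Qe : 0 < Q + e + 1 by lra.
set t := e / (Q + e + 1).
have t0 : 0 < t by rewrite /t divr_gt0.
have t1 : t < 1 by rewrite /t ltr_pdivrMr // mul1r; lra.
have := H t t0 t1.
have : Q * t <= e.
  rewrite /t mulrA ler_pdivrMr //; nra.
lra.
Qed.

Lemma var_ineq (R : realType) (G : choiceType) (d : G -> G -> R)
  (geo : G -> G -> R -> G) (p c lambda : R) (f : G -> R) (x u v : G) :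
  is_metric d -> p_uniformly_convex d geo p c -> convex_fun geo f ->
  1 < p -> 0 < c -> 0 < lambda ->
  argmin (prox_obj d f p lambda x) u ->
  f u + (p * lambda `^ (p - 1))^-1 * d x u `^ p <=
  f v + (p * lambda `^ (p - 1))^-1 * d x v `^ p
      - (p * lambda `^ (p - 1))^-1 * (c / 2) * d u v `^ p.
Proof.
move=> [d0 d00 dsym dtri] uc cf p1 c0 l0 Hu.
set K := (p * lambda `^ (p - 1))^-1.
have K0 : 0 < K by rewrite /K invr_gt0 mulr_gt0 ?powR_gt0 //; lra.
apply: alg_lim.
  by rewrite mulr_ge0 ?powR_ge0 // mulr_ge0 // ?(ltW K0) //; lra.
move=> t t0 t1.
have tI : 0 <= t <= 1 by apply/andP; split; lra.
apply: (@alg_step _ K c (f u) (f v) (f (geo u v t)) _ _ (d x (geo u v t) `^ p)) => //.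
- have := Hu (geo u v t); rewrite /prox_obj -/K.
  by rewrite (dsym u x) (dsym (geo u v t) x).
- exact: cf.
- exact: uc.
Qed.

Lemma near_oo_ex (P : nat -> Prop) : (\forall n \near \oo, P n) -> exists N, forall n, (N <= n)%N -> P n.
Proof. case=> N _ HN. by exists N => n /HN. Qed.

Lemma mcvgP (R : realType) (G : choiceType) (d : G -> G -> R) u x :
  mcvg d u x -> forall e, 0 < e -> exists N, forall n, (N <= n)%N -> d (u n) x < e.
Proof.
move=> H e e0. move/cvgrPdist_lt: H => /(_ e e0) /near_oo_ex [N HN]; exists N => n /HN.
rewrite sub0r normrN. move=> h; apply: le_lt_trans h. exact: ler_norm.
Qed.

Lemma powR_contP (R : realType) (p a : R) : 0 < a -> forall e, 0 < e ->
  exists2 del, 0 < del & forall s, `|a - s| < del -> `|a `^ p - s `^ p| < e.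
Proof.
move=> a0 e e0.
have hc : (fun s : R => s `^ p) @ a --> a `^ p.
  have hd : derivable (fun s : R => s `^ p) a 1.
    apply: derivable_powR; by rewrite in_itv /= a0.
  exact: (differentiable_continuous ((derivable1_diffP _ _).1 hd)).
move/cvgrPdist_lt: hc => /(_ e e0) /nbhs_ballP [del del0 Hd].
exists del => // s hs; exact: Hd.
Qed.

Lemma incr_ge (phi : nat -> nat) : (forall n, (phi n < phi n.+1)%N) -> forall n, (n <= phi n)%N.
Proof.
move=> H; elim=> [|n IH] //. exact: leq_ltn_trans IH (H n).
Qed.

Lemma ex_large {R : realType} (r : R) : exists N, forall n, (N <= n)%N -> r <= n%:R.
Proof. exact: near_oo_ex _ (nbhs_infty_ger r). Qed.

Lemma ball_lb (R : realType) (G : choiceType) (d : G -> G -> R) (f : G -> R) :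
  is_metric d -> boundedly_compact d -> lsc d f ->
  forall x r, exists m, forall y, d x y <= r -> m <= f y.
Proof.
move=> _ bc hl x r.
apply: contrapT => H.
have Hn : forall n : nat, exists y, d x y <= r /\ f y < - n%:R.
  move=> n; apply: contrapT => Hno; apply: H; exists (- n%:R) => y hy.
  rewrite leNgt; apply/negP => hlt; apply: Hno; by exists y.
have [y Hy] := choice Hn.
have [phi [z [phiI Hc]]] : exists (phi : nat -> nat) (z : G),
    (forall n, (phi n < phi n.+1)%N) /\ mcvg d (y \o phi) z.
  apply: bc; exists x, r => n; exact: (Hy n).1.
have [N1 HN1] := near_oo_ex _ (hl _ _ Hc 1 ltr01).
have [N2 HN2] := ex_large (1 - f z : R).
pose n := maxn N1 N2.
have h1 := HN1 n (leq_maxl _ _).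
have h2 := HN2 n (leq_maxr _ _).
have h3 := (Hy (phi n)).2.
have h4 : (n%:R : R) <= (phi n)%:R by rewrite ler_nat incr_ge.
simpl in h1. lra.
Qed.

Lemma geo_dist (R : realType) (G : choiceType) (d : G -> G -> R) geo x y s :
  uniquely_geodesic d geo -> 0 <= s <= 1 -> d x (geo x y s) = s * d x y.
Proof.
move=> ug hs; have [[g0 g1 gd] _] := ug x y.
have := gd 0 s; rewrite g0 => ->; last by [].
  by rewrite sub0r normrN ger0_norm //; case/andP: hs.
by rewrite lexx ler01.
Qed.

Lemma coerc (R : realType) (G : choiceType) (d : G -> G -> R) geo (f : G -> R) x :
  is_metric d -> uniquely_geodesic d geo -> convex_fun geo f ->
  (exists m, forall y, d x y <= 1 -> m <= f y) ->
  exists b, 0 <= b /\ forall y, f x - b * (1 + d x y) <= f y.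
Proof.
move=> [d0 d00 dsym dtri] ug cf [m Hm].
have hx : m <= f x by apply: Hm; rewrite (proj2 (d00 x x) erefl) ler01.
exists (f x - m); split; first lra.
move=> y; have dy := d0 x y.
have [le1|gt1] := leP (d x y) 1.
  have := Hm y le1. nra.
set r := d x y in gt1 dy *.
have r0 : 0 < r by lra.
have sI : 0 <= r^-1 <= 1.
  apply/andP; split; first by rewrite invr_ge0 ltW.
  by rewrite invf_le1 // ltW.
have hz : d x (geo x y r^-1) <= 1.
  by rewrite geo_dist // -/r mulVf ?gt_eqF.
have := Hm _ hz; have := cf x y _ sI.
move=> hc hm.
have hrs : r * r^-1 = 1 by rewrite mulfV ?gt_eqF.
have : r * m <= r * ((1 - r^-1) * f x + r^-1 * f y).
  by rewrite ler_pM2l //; apply: le_trans hm hc.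
rewrite mulrDr mulrA mulrBr mulr1 hrs mulrA hrs mul1r.
nra.
Qed.

Lemma fin_contra (R : realType) (a b K1 K2 m e i : R) :
  a - e < b -> K1 - e < K2 -> i < e -> a + K1 = m + 3 * e -> b + K2 < m + i -> False.
Proof. lra. Qed.

Lemma prox_exists (R : realType) (G : choiceType) (d : G -> G -> R)
  (geo : G -> G -> R -> G) (p lambda : R) (f : G -> R) (x : G) :
  is_metric d -> uniquely_geodesic d geo -> boundedly_compact d ->
  convex_fun geo f -> lsc d f -> 1 < p -> 0 < lambda ->
  exists u, argmin (prox_obj d f p lambda x) u.
Proof.
move=> dm ug bc cf hl p1 l0.
have [d0 d00 dsym dtri] := dm.
set K := (p * lambda `^ (p - 1))^-1.
have K0 : 0 < K by rewrite /K invr_gt0 mulr_gt0 ?powR_gt0 //; lra.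
have [m0 Hm0] := @ball_lb _ _ d f dm bc hl x 1.
have [b [b0 Hb]] := @coerc _ _ d geo f x dm ug cf (ex_intro _ m0 (Hm0)).
set F := prox_obj d f p lambda x.
have FE : forall y, F y = f y + K * d x y `^ p by move=> y; rewrite /F /prox_obj dsym.
have dxx : d x x = 0 by apply/d00.
have p0 : p != 0 by apply/negP => /eqP; lra.
have Fx : F x = f x by rewrite FE dxx powR0 // mulr0 addr0.
set T := Num.max 1 (((b + 1) / K) `^ (p - 1)^-1).
have T1 : 1 <= T by rewrite le_max lexx.
have Tbig : forall t, T <= t -> (b + 1) * t <= K * t `^ p.
  move=> t Tt.
  have t0 : 0 <= t by lra.
  rewrite -(mulr_powRB1 t0) ?(lt_trans ltr01 p1) //.
  have p10 : p - 1 != 0 by apply/negP => /eqP; lra.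
  have hX : ((b + 1) / K) `^ (p - 1)^-1 <= t by apply: le_trans Tt; rewrite le_max lexx orbT.
  have := @ge0_ler_powR _ (p - 1) _ _ _ (powR_ge0 _ _) _ hX.
  rewrite -powRrM mulVf // powRr1; last by rewrite divr_ge0 // ?ltW //; lra.
  move=> h.
  have {}h : (b + 1) / K <= t `^ (p - 1) by apply: h; [lra | rewrite nnegrE].
  have e1 : (b + 1) / K * K = b + 1 by rewrite divfK ?gt_eqF.
  have : 0 <= t * (K * (t `^ (p - 1) - (b + 1) / K)).
    by rewrite mulr_ge0 // mulr_ge0 ?subr_ge0 // ltW.
  rewrite mulrBr (mulrC K ((b + 1) / K)) e1. nra.
have Kp : forall y, 0 <= K * d x y `^ p by move=> y; rewrite mulr_ge0 ?powR_ge0 ?ltW.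
have Flb : forall y, f x - b - b * T <= F y.
  move=> y; rewrite FE; have := Hb y; have := d0 x y; have := Kp y.
  have [Tt|tT] := leP T (d x y).
    have := Tbig _ Tt; nra.
  nra.
have Fsub : forall y, F y <= f x + 1 -> d x y <= Num.max T (b + 1).
  move=> y; rewrite FE => hy; have := Hb y; have := d0 x y; have := Kp y.
  have [Tt|tT] := leP T (d x y).
    have := Tbig _ Tt => h1 h2 h3 h4; rewrite le_max; apply/orP; right; nra.
  by move=> *; rewrite le_max (ltW tT).
pose E := [set F y | y in [set: G]].
have hlb : has_lbound E.
  exists (f x - b - b * T) => v [y _ <-]; exact: Flb.
have hinf : has_inf E by split => //; exists (F x); exists x.
set m := inf E.
have mlb : forall y, m <= F y by move=> y; apply: ge_inf => //; exists y.
have Hseq : forall n : nat, exists y, F y < m + (n.+1%:R)^-1.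
  move=> n; have hn : 0 < (n.+1%:R : R)^-1 by rewrite invr_gt0 ltr0Sn.
  have [v [y _ <-] hv] := inf_adherent hn hinf.
  by exists y.
have [y Hy] := choice Hseq.
have [phi [z [phiI Hc]]] : exists (phi : nat -> nat) (z : G),
    (forall n, (phi n < phi n.+1)%N) /\ mcvg d (y \o phi) z.
  apply: bc; exists x, (Num.max T (b + 1)) => n; apply: Fsub.
  have := Hy n; have := mlb x; rewrite Fx => h1 h2.
  have : (n.+1%:R : R)^-1 <= 1 by rewrite invf_le1 ?ler1n ?ltr0Sn.
  move=> h3; apply/ltW; apply: (lt_le_trans h2); exact: lerD.
exists z => w; apply: le_trans (mlb w).
rewrite leNgt; apply/negP => hlt.
set e := (F z - m) / 3.
have e0 : 0 < e by rewrite /e divr_gt0 // subr_gt0.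
have e3 : F z = m + 3 * e by rewrite /e; field.
have [N1 HN1] := near_oo_ex _ (hl _ _ Hc e e0).
have [N2 HN2] : exists N, forall n, (N <= n)%N ->
    K * d x z `^ p - e < K * d x (y (phi n)) `^ p.
  have [az|az] := eqVneq (d x z) 0.
    exists 0%N => k _; rewrite az powR0 // mulr0 sub0r.
    by apply: (lt_le_trans _ (Kp _)); rewrite oppr_lt0.
  have a0 : 0 < d x z by rewrite lt_neqAle eq_sym az d0.
  have eK : 0 < e / K by rewrite divr_gt0.
  have [del del0 Hdel] := @powR_contP _ p _ a0 _ eK.
  have [N HN] := @mcvgP _ _ d _ _ Hc _ del0.
  exists N => k /HN /= hk.
  have hab : `|d x z - d x (y (phi k))| < del.
    apply: le_lt_trans hk. rewrite ler_norml; apply/andP; split.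
      have := dtri x z (y (phi k)); rewrite (dsym z). lra.
    have := dtri x (y (phi k)) z. lra.
  have := Hdel _ hab; rewrite ltr_norml => /andP [_ hlt2].
  have : K * (d x z `^ p - d x (y (phi k)) `^ p) < K * (e / K) by rewrite ltr_pM2l.
  have eKK : K * (e / K) = e by rewrite mulrC divfK ?gt_eqF.
  rewrite eKK mulrBr. lra.
have [N3 HN3] := ex_large (e^-1).
pose n := maxn N1 (maxn N2 N3).
have h1 := HN1 n (leq_maxl _ _).
have h2 := HN2 n (leq_trans (leq_maxl _ _) (leq_maxr _ _)).
have hn := @incr_ge phi phiI n.
have h3 := HN3 (phi n) (leq_trans (leq_trans (leq_maxr _ _) (leq_maxr _ _)) hn).
have h4 : ((phi n).+1%:R : R)^-1 < e.
  rewrite invf_plt ?posrE ?ltr0Sn // -addn1 natrD; lra.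
have := Hy (phi n); rewrite FE; move: h1 => /= h1.
move: e3; rewrite FE => e3 h5. exact: (@fin_contra _ _ _ _ _ _ _ _ h1 h2 h4 e3 h5).
Qed.

Lemma sum_alg (R : realType) (K c fu fv a1 a2 b1 b2 D : R) : 0 < K ->
  fu + K * a1 <= fv + K * b1 - K * (c / 2) * D ->
  fv + K * a2 <= fu + K * b2 - K * (c / 2) * D ->
  c * D <= b1 + b2 - a1 - a2.
Proof.
move=> K0 h1 h2; rewrite -subr_ge0.
have : 0 <= K * (b1 + b2 - a1 - a2 - c * D).
  have -> : K * (b1 + b2 - a1 - a2 - c * D) =
    (fv + K * b1 - K * (c / 2) * D - (fu + K * a1)) +
    (fu + K * b2 - K * (c / 2) * D - (fv + K * a2)) by field.
  lra.
by rewrite pmulr_rge0.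
Qed.

Lemma alg2 (R : realType) (c D S : R) : 0 < c -> c * D <= S -> c ^+ 2 / 4 * D <= c / 4 * S.
Proof. move=> c0 h. have : c / 4 * (c * D) <= c / 4 * S by rewrite ler_pM2l ?divr_gt0. 
have -> : c / 4 * (c * D) = c ^+ 2 / 4 * D by field. by []. Qed.

Lemma alg3 (R : realType) (c D X a1 a2 b1 b2 : R) : 3 / 2 < c ->
  c * D <= b1 + b2 - a1 - a2 ->
  D <= (1 + (2 - c) / (c - 1)) * X
     - (1 - c * (c - 1) / (2 + c * (c - 1))) / (c * (c - 1) / (2 + c * (c - 1)))
       * (c / 2 * (a1 + a2 + D + X - b2 - b1)).
Proof.
move=> c32 h.
have c1 : 0 < c - 1 by lra.
have c0 : c != 0 by apply/negP => /eqP; lra.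
have c10 : c - 1 != 0 by rewrite gt_eqF.
have c2 : 2 + c * (c - 1) != 0 by rewrite gt_eqF //; nra.
have -> : (1 + (2 - c) / (c - 1)) * X
     - (1 - c * (c - 1) / (2 + c * (c - 1))) / (c * (c - 1) / (2 + c * (c - 1)))
       * (c / 2 * (a1 + a2 + D + X - b2 - b1)) = (b1 + b2 - a1 - a2 - D) / (c - 1).
  by field; rewrite c0 c10 c2.
rewrite ler_pdivlMr //; nra.
Qed.

Theorem mainTheorem11 (R : realType) (G : choiceType) (d : G -> G -> R)
  (geo : G -> G -> R -> G) (p c lambda : R) (f : G -> R) :
  is_metric d -> uniquely_geodesic d geo -> boundedly_compact d ->
  1 < p -> 0 < c -> p_uniformly_convex d geo p c ->
  convex_fun geo f -> lsc d f -> 0 < lambda ->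
  [/\ (forall x, argmin f x -> prox d f p lambda x = x),
      (forall x y, Delta d p c x y (prox d f p lambda x) (prox d f p lambda y)
                   >= c ^+ 2 / 4 * d (prox d f p lambda x) (prox d f p lambda y) `^ p) &
      (3 / 2 < c <= 2 ->
         forall x y,
           d (prox d f p lambda x) (prox d f p lambda y) `^ p <=
             (1 + (2 - c) / (c - 1)) * d x y `^ p
             - (1 - c * (c - 1) / (2 + c * (c - 1))) / (c * (c - 1) / (2 + c * (c - 1)))
               * psi d p c x y (prox d f p lambda x) (prox d f p lambda y))].
Proof.
move=> dm ug bc p1 c0 uc cf hl l0.
have [d0 d00 dsym dtri] := dm.
set K := (p * lambda `^ (p - 1))^-1.
have K0 : 0 < K by rewrite /K invr_gt0 mulr_gt0 ?powR_gt0 //; lra.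
have pmin : forall x, argmin (prox_obj d f p lambda x) (prox d f p lambda x).
  move=> x; rewrite /prox; apply: xgetPex; exact: (@prox_exists _ _ d geo p lambda f x dm ug bc cf hl p1 l0).
have key : forall x y,
    c * d (prox d f p lambda x) (prox d f p lambda y) `^ p <=
    d x (prox d f p lambda y) `^ p + d y (prox d f p lambda x) `^ p
    - d x (prox d f p lambda x) `^ p - d y (prox d f p lambda y) `^ p.
  move=> x y.
  have h1 := @var_ineq _ _ d geo p c lambda f x _ (prox d f p lambda y) dm uc cf p1 c0 l0 (pmin x).
  have h2 := @var_ineq _ _ d geo p c lambda f y _ (prox d f p lambda x) dm uc cf p1 c0 l0 (pmin y).
  rewrite -/K in h1 h2; rewrite (dsym (prox d f p lambda y)) in h2.
  exact: (@sum_alg _ K c _ _ _ _ _ _ _ K0 h1 h2).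
split.
- move=> x hx.
  set u := prox d f p lambda x.
  have hu := pmin x x; rewrite /prox_obj -/K -/u in hu.
  have dxx : d x x = 0 by apply/d00.
  have p0 : p != 0 by apply/negP => /eqP; lra.
  rewrite dxx powR0 // mulr0 addr0 in hu.
  have h := hx u.
  have hp : K * d u x `^ p <= 0 by lra.
  have hp0 : d u x `^ p = 0.
    apply/eqP; rewrite eq_le powR_ge0 andbT.
    by rewrite -(pmulr_rle0 _ K0).
  by apply/d00; apply: powR_eq0_eq0 hp0.
- move=> x y; rewrite /Delta; exact: alg2.
- move=> /andP [hc _] x y; rewrite /psi; exact: alg3.
Qed.
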